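(* Let $q$ be an odd prime power with $q\neq 3,5$. Then $\mathrm{PSL}(2,q)\notin\mathfrak{Y}_n$.
   Context: $\mathfrak{Y}_n$ denotes the class of all groups $G$ such that $N_G(A)=A$ for every non-abelian subgroup $A\le G$. *)

(* Defs.v *)
From HB Require Import structures.
From mathcomp Require Import all_boot all_order all_algebra all_fingroup all_solvable all_field.
Set Implicit Arguments. Unset Strict Implicit. Unset Printing Implicit Defensive.
Import GRing.Theory.
Local Open Scope group_scope.

Definition Yn (gT : finGroupType) (G : {set gT}) : Prop :=
  forall A : {group gT}, A \subset G -> ~~ abelian A -> 'N_G(A) = A.

Definition SL2 (F : finFieldType) : {set {'GL_2[F]}} :=
  [set g : {'GL_2[F]} | (\det (GLval g) == 1)%R].

Lemma SL2_group_set (F : finFieldType) : group_set (SL2 F).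
Proof.
apply/group_setP; split.
  by rewrite inE GL_1E det1.
move=> x y; rewrite !inE => /eqP dx /eqP dy.
by rewrite GL_MxE det_mulmx dx dy mulr1.
Qed.

Canonical SL2_group (F : finFieldType) := Group (SL2_group_set F).

Definition PSL2 (F : finFieldType) := (SL2_group F / 'Z(SL2_group F))%G.

(* Main.v *)
Require Import Defs.
From mathcomp Require Import all_boot all_order all_algebra all_fingroup all_solvable all_field.
From mathcomp Require Import ring zify.
Set Implicit Arguments. Unset Strict Implicit. Unset Printing Implicit Defensive.
Import GRing.Theory.
Local Open Scope group_scope.

Lemma crit (F : finFieldType) (H : {group {'GL_2[F]}}) (g x y : {'GL_2[F]}) :
  H \subset SL2 F -> g \in SL2 F -> H :^ g \subset H -> x \in H -> y \in H ->
  [~ x, y] \notin 'Z(SL2_group F) ->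
  g \notin 'Z(SL2_group F) * H ->
  ~ Yn (PSL2 F).
Proof.
move=> sHS gS sHg xH yH nxy ngH Y.
set Z := 'Z(SL2_group F).
have nZS : SL2 F \subset 'N(Z) by apply: normal_norm; apply: center_normal.
have nZH : H \subset 'N(Z) by apply: subset_trans nZS.
have gN : g \in 'N(Z) by apply: (subsetP nZS).
have eHg : H :^ g = H by apply/eqP; rewrite eqEcard sHg cardJg leqnn.
have := Y (H / Z)%G (quotientS _ sHS).
have nab : ~~ abelian (H / Z).
  apply/negP => /centsP ab.
  have := ab _ (mem_quotient Z xH) _ (mem_quotient Z yH).
  move=> cxy; apply/negP: nxy; apply/negPn.
  apply: coset_idr; first by rewrite groupR // (subsetP nZH).
  rewrite morphR ?(subsetP nZH) //=.
  by apply/eqP; apply/commgP.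
move/(_ nab) => eN.
have : coset Z g \in 'N_(PSL2 F)(H / Z).
  rewrite inE mem_quotient //=; apply/normP.
  by rewrite -quotientJ // eHg.
rewrite eN => gq.
apply/negP: ngH; apply/negPn.
rewrite -quotientK //.
by rewrite inE gN inE.
Qed.

Local Close Scope group_scope.

Lemma fib_eq (T U : finType) (A : {set T}) (f : T -> U) (s : T -> T) (y0 : T) :
  (forall x y, x \in A -> y \in A -> f x = f y -> y = x \/ y = s x) ->
  y0 \in A -> [set x in A | f x == f y0] \subset [set y0; s y0].
Proof.
move=> H yA; apply/subsetP => x; rewrite !inE => /andP[xA /eqP e].
by case: (H _ _ yA xA (esym e)) => ->; rewrite eqxx ?orbT.
Qed.

Lemma fib_le (T U : finType) (A : {set T}) (f : T -> U) (s : T -> T) :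
  (forall x y, x \in A -> y \in A -> f x = f y -> y = x \/ y = s x) ->
  #|A| <= 2 * #|f @: A|.
Proof.
move=> H.
rewrite -[#|A|]sum1_card (partition_big_imset f) /= mulnC -sum_nat_const.
apply: leq_sum => _ /imsetP[y0 yA ->].
rewrite sum1dep_card.
apply: leq_trans (subset_leq_card (fib_eq H yA)) _.
by rewrite cards2; case: (_ != _).
Qed.

Lemma fib_ge (T U : finType) (A : {set T}) (f : T -> U) (s : T -> T) :
  (forall x, x \in A -> [/\ s x \in A, s x != x & f (s x) = f x]) ->
  2 * #|f @: A| <= #|A|.
Proof.
move=> H.
rewrite -[#|A|]sum1_card (partition_big_imset f) /= mulnC -sum_nat_const.
apply: leq_sum => _ /imsetP[y0 yA ->].
rewrite sum1dep_card.
have [sA ns fs] := H _ yA.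
have <- : #|[set y0; s y0]| = 2 by rewrite cards2 eq_sym ns.
apply: subset_leq_card; apply/subsetP => x; rewrite !inE.
by case/orP => /eqP ->; rewrite ?fs eqxx ?yA ?sA.
Qed.

Local Open Scope ring_scope.

Definition mx2 (F : finFieldType) (a b c d : F) : 'M[F]_2 :=
  \matrix_(i < 2, j < 2) (if (i : nat) == 0%N then (if (j : nat) == 0%N then a else b)
                          else (if (j : nat) == 0%N then c else d)).

Lemma mx2_eta (F : finFieldType) (M : 'M[F]_2) : M = mx2 (M 0 0) (M 0 1) (M 1 0) (M 1 1).
Proof.
apply/matrixP => i j; rewrite !mxE.
by case: i => [[|[|i]] Hi] //; case: j => [[|[|j]] Hj] //=; congr (M _ _); apply: val_inj.
Qed.

Lemma mul_mx2 (F : finFieldType) (a b c d a' b' c' d' : F) :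
  (mx2 a b c d *m mx2 a' b' c' d' =
   mx2 (a * a' + b * c') (a * b' + b * d') (c * a' + d * c') (c * b' + d * d'))%R.
Proof.
apply/matrixP => i j; rewrite !mxE !big_ord_recr big_ord0 /= add0r !mxE.
by case: i => [[|[|i]] Hi] //; case: j => [[|[|j]] Hj].
Qed.

Lemma det_mx2 (F : finFieldType) (a b c d : F) : \det (mx2 a b c d) = (a * d - b * c)%R.
Proof.
rewrite (expand_det_row _ 0) !big_ord_recr big_ord0 /= add0r /cofactor !mxE /=.
rewrite !det_mx11 !mxE /=.
rewrite !expr0 !expr1 /=. ring.
Qed.

Lemma mx2_inj (F : finFieldType) (a b c d a' b' c' d' : F) :
  mx2 a b c d = mx2 a' b' c' d' -> [/\ a = a', b = b', c = c' & d = d'].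
Proof.
move=> e.
have E i j : mx2 a b c d i j = mx2 a' b' c' d' i j by rewrite e.
have := E 0 0; have := E 0 1; have := E 1 0; have := E 1 1; rewrite !mxE /=.
by move=> -> -> -> ->.
Qed.

Lemma mx2_1 (F : finFieldType) : (1%:M : 'M[F]_2) = mx2 1 0 0 1.
Proof. by apply/matrixP => i j; rewrite !mxE; case: i => [[|[|i]] Hi] //; case: j => [[|[|j]] Hj]. Qed.

Lemma mx2_opp (F : finFieldType) (a b c d : F) : (- mx2 a b c d = mx2 (-a) (-b) (-c) (-d))%R.
Proof. by apply/matrixP => i j; rewrite !mxE; case: i => [[|[|i]] Hi] //; case: j => [[|[|j]] Hj]. Qed.


Definition mkGL (F : finFieldType) (M : 'M[F]_2) : {'GL_2[F]} := insubd (1%g : {'GL_2[F]}) M.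

Lemma mkGLK (F : finFieldType) (M : 'M[F]_2) : \det M = 1 -> GLval (mkGL M) = M.
Proof.
move=> dM; rewrite /mkGL insubdK //.
by rewrite unfold_in /= unitmxE dM unitr1.
Qed.

Lemma mkGL_SL (F : finFieldType) (M : 'M[F]_2) : \det M = 1 -> mkGL M \in SL2 F.
Proof. by move=> dM; rewrite inE mkGLK ?dM. Qed.

Lemma center_pm (F : finFieldType) (z : {'GL_2[F]}) :
  z \in ('Z(SL2_group F))%g -> GLval z = 1%:M \/ GLval z = - 1%:M.
Proof.
move=> zZ.
have [zS cz] : z \in SL2 F /\ (forall u, u \in SL2 F -> (z * u = u * z)%g).
  split; first by move: zZ; rewrite inE => /andP[].
  move=> u uS; move/centerP: zZ => [_ ] /(_ u uS) //.
have d1 : \det (mx2 (1 : F) 1 0 1) = 1 by rewrite det_mx2; ring.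
have d2 : \det (mx2 (1 : F) 0 1 1) = 1 by rewrite det_mx2; ring.
have e1 := cz _ (mkGL_SL d1); have e2 := cz _ (mkGL_SL d2).
have := congr1 GLval e1; have := congr1 GLval e2.
rewrite !GL_MxE !mkGLK // (mx2_eta (GLval z)) !mul_mx2.
move=> /mx2_inj [f1 f2 f3 f4] /mx2_inj [g1 g2 g3 g4].
move: zS; rewrite inE (mx2_eta (GLval z)) det_mx2 => /eqP dz.
set a := GLval z 0 0 in f1 f2 f3 f4 g1 g2 g3 g4 dz *.
set b := GLval z 0 1 in f1 f2 f3 f4 g1 g2 g3 g4 dz *.
set c := GLval z 1 0 in f1 f2 f3 f4 g1 g2 g3 g4 dz *.
set d := GLval z 1 1 in f1 f2 f3 f4 g1 g2 g3 g4 dz *.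
have hb : b = 0.
  by transitivity ((a*1+b*1) - (1*a+0*c)); [ring | rewrite f1; ring].
have hc : c = 0.
  by transitivity ((1*a+1*c) - (a*1+b*0)); [ring | rewrite g1; ring].
have hd : d = a.
  by transitivity ((c*1+d*1) - (1*a+1*c) + a); [ring | rewrite f3; ring].
have a2 : a ^+ 2 = 1.
  by rewrite -dz hb hc hd; ring.
rewrite mx2_1 mx2_opp !mxE /= hb hc hd oppr0.
by move/eqP: a2; rewrite sqrf_eq1 => /orP[] /eqP ->; [left | right].
Qed.

Lemma crit2 (F : finFieldType) (P : pred 'M[F]_2) (G G' X X' Y Y' : 'M[F]_2) :
  P 1%:M -> (forall M N, \det M = 1 -> \det N = 1 -> P M -> P N -> P (M *m N)) ->
  \det G = 1 -> G' *m G = 1%:M -> (forall M, \det M = 1 -> P M -> P (G' *m M *m G)) ->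
  ~~ P G -> ~~ P (- G) ->
  \det X = 1 -> \det Y = 1 -> X' *m X = 1%:M -> Y' *m Y = 1%:M -> P X -> P Y ->
  X' *m Y' *m X *m Y != 1%:M -> X' *m Y' *m X *m Y != - 1%:M ->
  ~ Yn (PSL2 F).
Proof.
move=> P1 PM dG eG PG nG nG' dX dY eX eY PX PY c1 c2.
have dinv (A A' : 'M[F]_2) : \det A = 1 -> A' *m A = 1%:M -> \det A' = 1.
  move=> dA e; have := congr1 (@determinant _ 2) e; rewrite det_mulmx dA mulr1 det1 //.
have dG' := dinv _ _ dG eG; have dX' := dinv _ _ dX eX; have dY' := dinv _ _ dY eY.
pose H := [set h : {'GL_2[F]} | (\det (GLval h) == 1) && P (GLval h)].
have gH : group_set H.
  apply/group_setP; split; first by rewrite inE GL_1E det1 eqxx P1.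
  move=> u v; rewrite !inE => /andP[/eqP du Pu] /andP[/eqP dv Pv].
  by rewrite det_mulmx du dv mulr1 eqxx PM.
have invE (A A' : 'M[F]_2) : \det A = 1 -> A' *m A = 1%:M -> ((mkGL A)^-1)%g = mkGL A'.
  move=> dA e; apply: mulg1_eq; apply: val_inj.
  change (GLval (mkGL A * mkGL A')%g = GLval 1%g).
  by rewrite GL_MxE !mkGLK ?(dinv _ _ dA e) // GL_1E; apply: mulmx1C.
pose g := mkGL G; pose x := mkGL X; pose y := mkGL Y.
have sHS : Group gH \subset SL2 F.
  by apply/subsetP => h; rewrite !inE => /andP[].
apply: (@crit F (Group gH) g x y sHS (mkGL_SL dG)).
- apply/subsetP => _ /imsetP[h hH ->].
  move: hH; rewrite !inE => /andP[/eqP dh Ph].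
  rewrite /conjg (invE G G') // !GL_MxE !mkGLK //.
  by rewrite mulmxA !det_mulmx dh dG dG' !mulr1 eqxx /= PG.
- by rewrite inE mkGLK ?dX ?eqxx ?PX.
- by rewrite inE mkGLK ?dY ?eqxx ?PY.
- apply/negP => /center_pm.
  rewrite /commg /conjg (invE X X') // (invE Y Y') // !GL_MxE !mkGLK //.
  by rewrite !mulmxA; case=> e; [move/eqP: c1 | move/eqP: c2].
- apply/negP => /mulsgP [z h zZ hH eg].
  move: hH; rewrite inE => /andP[_ Ph].
  have := congr1 GLval eg; rewrite GL_MxE mkGLK //.
  case: (center_pm zZ) => ->; rewrite ?mul1mx => eGh.
  + by move: nG; rewrite eGh Ph.
  + by move: nG'; rewrite eGh mulNmx mul1mx opprK Ph.
Qed.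


Lemma natr_card (F : finFieldType) : (#|F|%:R : F) = 0.
Proof.
have := @expg_cardG F [set: F]%G (GRing.one F) (in_setT _).
by rewrite cardsT.
Qed.

Lemma two_neq0 (F : finFieldType) : odd #|F| -> (2 : F) != 0.
Proof.
move=> oF; apply/eqP => h2.
have := natr_card F; rewrite -[#|F|]odd_double_half oF natrD -muln2 natrM h2 mulr0 addr0.
by move/eqP; rewrite oner_eq0.
Qed.

Lemma natr_inj7 (F : finFieldType) (k : nat) : #|F| = 7%N -> (k < 7)%N -> (k%:R : F) = 0 -> k = 0%N.
Proof.
move=> c7 lt0 hk.
have [p pp pc] := finPcharP F.
have h7 : (7%:R : F) = 0 by rewrite -c7 natr_card.
have : (p %| 7)%N by rewrite (dvdn_pcharf pc) h7.
rewrite dvdn_prime2 //= => /eqP ep; rewrite ep in pc.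
have : (7 %| k)%N by rewrite (dvdn_pcharf pc) hk.
by case: k lt0 {hk} => // k; rewrite ltnS => lk /dvdn_leq; move/(_ isT); rewrite ltnNge lk.
Qed.


Lemma exists_notin (T : finType) (s : seq T) : (size s < #|T|)%N -> exists x, x \notin s.
Proof.
move=> h; case: (pickP (fun x => x \notin s)) => [x hx|h0]; first by exists x.
exfalso; have : (#|T| <= size s)%N.
  apply: leq_trans (card_size s); apply: subset_leq_card.
  by apply/subsetP => x _; move: (h0 x) => /= /negbFE.
by rewrite leqNgt h.
Qed.

Lemma caseI (F : finFieldType) (i : F) : odd #|F| -> (7 <= #|F|)%N -> i ^+ 2 = -1 -> ~ Yn (PSL2 F).
Proof.
move=> oF c7 hi.
have n2 := two_neq0 oF.
have [c hc] : exists c : F, c \notin [:: 0; 1; -1; i; -i].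
  by apply: exists_notin; apply: leq_trans c7.
have c0 : c != 0 by move: hc; rewrite !inE; case: eqP.
have c4 : c ^+ 4 != 1.
  apply/eqP => h4; move: hc; rewrite !inE.
  have /eqP : (c - 1) * (c + 1) * ((c - i) * (c + i)) = 0.
    by transitivity (c ^+ 4 - 1 + (- 1 - i ^+ 2) * (c ^+ 2 - 1)); [ring | rewrite h4 hi; ring].
  rewrite !mulf_eq0 subr_eq0 addr_eq0 subr_eq0 addr_eq0.
  by case/orP => [/orP[]|/orP[]] ->; rewrite ?orbT.
have Ei : i * i = -1 by rewrite -expr2 hi.
have cV : c / c = 1 by rewrite mulfV.
have Vc : c^-1 * c = 1 by rewrite mulVf.
 pose P := fun M : 'M[F]_2 => (M 1 0 == 0) && ((M 0 0) ^+ 4 == 1).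
apply: (@crit2 F P (mx2 c 0 0 c^-1) (mx2 c^-1 0 0 c) (mx2 i 0 0 (-i)) (mx2 (-i) 0 0 i)
                 (mx2 1 1 0 1) (mx2 1 (-1) 0 1)).
all: rewrite ?mx2_1 ?mx2_opp ?mul_mx2 ?det_mx2 /P ?mxE /=.
all: rewrite ?mulr0 ?mul0r ?addr0 ?add0r ?mulr1 ?mul1r ?mulrN ?mulNr ?opprK ?oppr0 ?subr0 ?sub0r ?Ei ?cV ?Vc ?expr1n ?eqxx ?mulrNN //.
all: rewrite ?mulr0 ?mul0r ?addr0 ?add0r ?mulr1 ?mul1r ?mulrN ?mulNr ?opprK ?oppr0 ?subr0 ?sub0r ?Ei ?cV ?Vc ?expr1n ?eqxx ?mulrNN //.
- move=> M N _ _; rewrite (mx2_eta M) (mx2_eta N) mul_mx2 !mxE /=.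
  move=> /andP[/eqP -> /eqP h1] /andP[/eqP -> /eqP h2].
  by rewrite !mulr0 !mul0r !addr0 eqxx exprMn h1 h2 mulr1 eqxx.
- move=> M _; rewrite (mx2_eta M) !mul_mx2 !mxE /= => /andP[/eqP h0 /eqP h1].
  apply/andP; split; apply/eqP; first by rewrite h0; ring.
  rewrite -h1; congr (_ ^+ 4).
  by rewrite !mul0r !mulr0 !addr0 mulrC mulrA mulfV // mul1r.
- rewrite (_ : (- c) ^+ 4 = c ^+ 4) /=; [exact: c4 | ring].
- by rewrite subrr.
- rewrite (_ : i ^+ 4 = (i ^+ 2) ^+ 2); last ring.
  rewrite hi sqrrN expr1n /=. apply/eqP. reflexivity.
- apply/eqP => /mx2_inj [_ h _ _]; move/eqP: n2; apply.
  by rewrite -h; ring.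
- apply/eqP => /mx2_inj [_ h _ _]; move/eqP: n2; apply.
  by rewrite -h; ring.
Qed.


Definition q4 := (nat * nat * nat * nat)%type.
Definition mul7 (a b : q4) : q4 :=
  let: (a0, a1, a2, a3) := a in let: (b0, b1, b2, b3) := b in
  (((a0 * b0 + a1 * b2) %% 7)%N, ((a0 * b1 + a1 * b3) %% 7)%N,
   ((a2 * b0 + a3 * b2) %% 7)%N, ((a2 * b1 + a3 * b3) %% 7)%N).
Definition neg7 (a : q4) : q4 :=
  let: (a0, a1, a2, a3) := a in
  (((7 - a0) %% 7)%N, ((7 - a1) %% 7)%N, ((7 - a2) %% 7)%N, ((7 - a3) %% 7)%N).
Definition small7 (a : q4) : bool :=
  let: (a0, a1, a2, a3) := a in [&& (a0 < 7)%N, (a1 < 7)%N, (a2 < 7)%N & (a3 < 7)%N].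
Definition det7 (a : q4) : bool :=
  let: (a0, a1, a2, a3) := a in ((a0 * a3) %% 7 == (a1 * a2 + 1) %% 7)%N.
Definition lift7 (F : finFieldType) (a : q4) : 'M[F]_2 :=
  let: (a0, a1, a2, a3) := a in mx2 a0%:R a1%:R a2%:R a3%:R.

Definition L7 : seq q4 := [:: (0, 1, 6, 0); (0, 2, 3, 1); (0, 3, 2, 1); (0, 4, 5, 6); (0, 5, 4, 6); (0, 6, 1, 0); (1, 0, 0, 1); (1, 4, 5, 0); (1, 5, 4, 0); (2, 0, 1, 4); (2, 1, 0, 4); (2, 3, 3, 5); (3, 0, 1, 5); (3, 1, 0, 5); (3, 5, 5, 4); (4, 0, 6, 2); (4, 2, 2, 3); (4, 6, 0, 2); (5, 0, 6, 3); (5, 4, 4, 2); (5, 6, 0, 3); (6, 0, 0, 6); (6, 2, 3, 0); (6, 3, 2, 0)]%N.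

Lemma L7_closed : all (fun t => all (fun u => mul7 t u \in L7) L7) L7.
Proof. by vm_compute. Qed.

Lemma L7_small : all small7 L7.
Proof. by vm_compute. Qed.

Lemma L7_norm : all (fun t => mul7 (mul7 (5, 2, 5, 5)%N t) (5, 5, 2, 5)%N \in L7) L7.
Proof. by vm_compute. Qed.

Lemma natr_mod7 (F : finFieldType) (n : nat) : (7%:R : F) = 0 -> ((n %% 7)%N%:R : F) = n%:R.
Proof. by move=> h7; rewrite {2}(divn_eq n 7) natrD natrM h7 mulr0 add0r. Qed.

Lemma natr_eq7 (F : finFieldType) (a b : nat) : #|F| = 7%N -> (a < 7)%N -> (b < 7)%N ->
  (a%:R : F) = b%:R -> a = b.
Proof.
move=> c7 ha hb e; case: (leqP a b) => h.
- have : ((b - a)%N%:R : F) = 0 by rewrite natrB // e subrr.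
  move/(natr_inj7 c7) => /(_ (leq_ltn_trans (leq_subr _ _) hb)) /eqP.
  by rewrite subn_eq0 => h'; apply/eqP; rewrite eqn_leq h h'.
- have : ((a - b)%N%:R : F) = 0 by rewrite natrB ?(ltnW h) // e subrr.
  move/(natr_inj7 c7) => /(_ (leq_ltn_trans (leq_subr _ _) ha)) /eqP.
  by rewrite subn_eq0 leqNgt h.
Qed.

Lemma lift_mul (F : finFieldType) (t u : q4) : (7%:R : F) = 0 ->
  lift7 F t *m lift7 F u = lift7 F (mul7 t u).
Proof.
move=> h7; case: t => [[[a0 a1] a2] a3]; case: u => [[[b0 b1] b2] b3].
by rewrite /= mul_mx2 !natr_mod7 // !natrD !natrM.
Qed.

Lemma lift_neg (F : finFieldType) (t : q4) : (7%:R : F) = 0 -> small7 t ->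
  - lift7 F t = lift7 F (neg7 t).
Proof.
move=> h7; case: t => [[[a0 a1] a2] a3] /= /and4P[h0 h1 h2 h3].
by rewrite mx2_opp !natr_mod7 // !natrB ?(ltnW h0) ?(ltnW h1) ?(ltnW h2) ?(ltnW h3) // h7 !sub0r.
Qed.

Lemma lift_inj (F : finFieldType) (t u : q4) : #|F| = 7%N -> small7 t -> small7 u ->
  lift7 F t = lift7 F u -> t = u.
Proof.
move=> c7; case: t => [[[a0 a1] a2] a3]; case: u => [[[b0 b1] b2] b3].
move=> /and4P[h0 h1 h2 h3] /and4P[k0 k1 k2 k3] /mx2_inj [e0 e1 e2 e3].
by rewrite (natr_eq7 c7 h0 k0 e0) (natr_eq7 c7 h1 k1 e1) (natr_eq7 c7 h2 k2 e2) (natr_eq7 c7 h3 k3 e3).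
Qed.

Lemma lift_det (F : finFieldType) (t : q4) : (7%:R : F) = 0 -> det7 t -> \det (lift7 F t) = 1.
Proof.
move=> h7; case: t => [[[a0 a1] a2] a3] /= /eqP e.
rewrite det_mx2 -!natrM -(natr_mod7 (a0 * a3) h7) e natr_mod7 // natrD addrC addKr //.
Qed.

Lemma lift_one (F : finFieldType) : lift7 F (1, 0, 0, 1)%N = 1%:M.
Proof. by rewrite mx2_1. Qed.

Lemma caseIII (F : finFieldType) : #|F| = 7%N -> ~ Yn (PSL2 F).
Proof.
move=> c7.
have h7 : (7%:R : F) = 0 by rewrite -c7 natr_card.
pose P := fun M : 'M[F]_2 => has (fun t => M == lift7 F t) L7.
have notP (t : q4) M : small7 t -> t \notin L7 -> M = lift7 F t -> ~~ P M.
  move=> st tL ->; apply/hasP => [[u uL /eqP e]].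
  have su : small7 u by apply: (allP L7_small).
  by move: tL; rewrite (lift_inj c7 st su e) uL.
have Pl (t : q4) : t \in L7 -> P (lift7 F t) by move=> tL; apply/hasP; exists t.
apply: (@crit2 F P (lift7 F (5, 5, 2, 5)%N) (lift7 F (5, 2, 5, 5)%N)
                 (lift7 F (0, 1, 6, 0)%N) (lift7 F (0, 6, 1, 0)%N)
                 (lift7 F (2, 1, 0, 4)%N) (lift7 F (4, 6, 0, 2)%N)).
- by rewrite -lift_one; apply: Pl.
- move=> M N _ _ /hasP[t tL /eqP->] /hasP[u uL /eqP->].
  by rewrite lift_mul //; apply: Pl; apply: (allP (allP L7_closed t tL)).
- by apply: lift_det.
- by rewrite lift_mul // -lift_one; congr lift7; vm_compute.
- move=> M _ /hasP[t tL /eqP->].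
  by rewrite !lift_mul //; apply: Pl; apply: (allP L7_norm).
- by apply: (notP (5, 5, 2, 5)%N).
- by apply: (notP (neg7 (5, 5, 2, 5)%N)) => //; rewrite lift_neg.
- by apply: lift_det.
- by apply: lift_det.
- by rewrite lift_mul // -lift_one; congr lift7; vm_compute.
- by rewrite lift_mul // -lift_one; congr lift7; vm_compute.
- by apply: Pl.
- by apply: Pl.
- rewrite !lift_mul // -lift_one; apply/eqP => /lift_inj.
  by move=> /(_ c7 isT isT); vm_compute.
- rewrite !lift_mul // -lift_one lift_neg //; apply/eqP => /lift_inj.
  by move=> /(_ c7 isT isT); vm_compute.
Qed.


Lemma sq_eq (F : finFieldType) (x y : F) : x ^+ 2 = y ^+ 2 -> y = x \/ y = - x.
Proof.
move=> e; have /eqP : (y - x) * (y + x) = 0.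
  by transitivity (y ^+ 2 - x ^+ 2); [ring | rewrite e subrr].
rewrite mulf_eq0 subr_eq0 addr_eq0 => /orP[] /eqP; by [left | right].
Qed.

Lemma sum_sq_m1 (F : finFieldType) : odd #|F| -> exists a b : F, a ^+ 2 + b ^+ 2 = -1.
Proof.
move=> oF.
pose Sq := (fun x : F => x ^+ 2) @: [set: F].
pose Sq' := (fun y : F => -1 - y) @: Sq.
have h1 : (#|F| <= 2 * #|Sq|)%N.
  rewrite -cardsT; apply: (@fib_le _ _ _ _ (fun x => - x)) => x y _ _; exact: sq_eq.
have h2 : #|Sq'| = #|Sq|.
  by apply: card_imset => u v /= e; apply: oppr_inj; apply: (addrI (-1)).
case: (set_0Vmem (Sq :&: Sq')) => [e0|[z]].
  have : (#|Sq :|: Sq'| <= #|F|)%N by apply: max_card.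
  rewrite cardsU e0 cards0 subn0 h2 addnn -mul2n leqNgt.
  case/negP; rewrite ltn_neqAle h1 andbT.
  by apply/negP => /eqP e; move: oF; rewrite e oddM.
rewrite inE => /andP[/imsetP[a _ ->] /imsetP[_ /imsetP[b _ ->] e]].
by exists a, b; rewrite e; ring.
Qed.


Definition mulT (F : finFieldType) (p q : F * F) : F * F :=
  (p.1 * q.1 - p.2 * q.2, p.1 * q.2 + p.2 * q.1).
Definition sqT (F : finFieldType) (p : F * F) := mulT p p.
Definition cjT (F : finFieldType) (p : F * F) : F * F := (p.1, - p.2).
Definition ngT (F : finFieldType) (p : F * F) : F * F := (- p.1, - p.2).
Definition hm (F : finFieldType) (p : F * F) : 'M[F]_2 := mx2 p.1 p.2 (- p.2) p.1.
Definition Tset (F : finFieldType) := [set p : F * F | p.1 ^+ 2 + p.2 ^+ 2 == 1].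

Lemma hmM (F : finFieldType) (p q : F * F) : hm p *m hm q = hm (mulT p q).
Proof. by rewrite /hm mul_mx2; congr mx2; rewrite /=; ring. Qed.

Lemma hm_det (F : finFieldType) (p : F * F) : \det (hm p) = p.1 ^+ 2 + p.2 ^+ 2.
Proof. by rewrite det_mx2; ring. Qed.

Lemma hm_inj (F : finFieldType) (p q : F * F) : hm p = hm q -> p = q.
Proof. by case: p q => [a b] [c d] /mx2_inj [/= -> -> _ _]. Qed.

Lemma pairE (F : finFieldType) (a b c d : F) : a = c -> b = d -> (a, b) = (c, d).
Proof. by move=> -> ->. Qed.

Lemma mulTC (F : finFieldType) (p q : F * F) : mulT p q = mulT q p.
Proof. by apply: pairE; rewrite /=; ring. Qed.

Lemma mulTA (F : finFieldType) (p q r : F * F) : mulT p (mulT q r) = mulT (mulT p q) r.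
Proof. by apply: pairE; rewrite /=; ring. Qed.

Lemma sqTM (F : finFieldType) (p q : F * F) : sqT (mulT p q) = mulT (sqT p) (sqT q).
Proof. by apply: pairE; rewrite /=; ring. Qed.

Lemma sqT_cj (F : finFieldType) (p : F * F) : sqT (cjT p) = cjT (sqT p).
Proof. by apply: pairE; rewrite /=; ring. Qed.

Lemma sqT_ng (F : finFieldType) (p : F * F) : sqT (ngT p) = sqT p.
Proof. by apply: pairE; rewrite /=; ring. Qed.

Lemma cjT_mul (F : finFieldType) (p : F * F) : p \in Tset F -> mulT (cjT p) p = (1, 0).
Proof.
rewrite inE => /eqP e; apply: pairE; rewrite /= -?e; ring.
Qed.

Lemma mulT1 (F : finFieldType) (p : F * F) : mulT (1, 0) p = p.
Proof. by case: p => a b; apply: pairE; rewrite /=; ring. Qed.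

Lemma Tset_mul (F : finFieldType) (p q : F * F) : p \in Tset F -> q \in Tset F -> mulT p q \in Tset F.
Proof.
rewrite !inE => /eqP e1 /eqP e2; apply/eqP.
by rewrite -[1]mulr1 -{1}e1 -e2 /=; ring.
Qed.

Lemma Tset_cj (F : finFieldType) (p : F * F) : p \in Tset F -> cjT p \in Tset F.
Proof. by rewrite !inE /= sqrrN. Qed.

Lemma Tset_ng (F : finFieldType) (p : F * F) : p \in Tset F -> ngT p \in Tset F.
Proof. by rewrite !inE /= !sqrrN. Qed.

Lemma hm_ng (F : finFieldType) (p : F * F) : - hm p = hm (ngT p).
Proof. by rewrite /hm mx2_opp /= opprK. Qed.

Lemma hm1 (F : finFieldType) : hm (1, 0) = 1%:M :> 'M[F]_2.
Proof. by rewrite /hm mx2_1 /= oppr0. Qed.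

Lemma sqT_eq (F : finFieldType) (x y : F * F) : (2 : F) != 0 -> (forall z : F, z ^+ 2 != -1) ->
  x \in Tset F -> y \in Tset F -> sqT x = sqT y -> y = x \/ y = ngT x.
Proof.
move=> n2 nosq xT yT e.
pose u := mulT y (cjT x).
have yu : y = mulT u x.
  by rewrite /u -mulTA cjT_mul // mulTC mulT1.
have su : sqT u = (1, 0).
  by rewrite /u sqTM -e -sqTM mulTC cjT_mul // /sqT /mulT /=; apply: pairE; ring.
case: u su yu => u1 u2 /= [e1 e2] ->.
have : (2 * (u1 * u2)) = 0 by rewrite -e2; ring.
move/eqP; rewrite mulf_eq0 (negbTE n2) /= mulf_eq0 => /orP[] /eqP h.
- by move: (nosq u2); rewrite -e1 h; case/eqP; ring.
- move: e1; rewrite h mulr0 subr0 => /eqP; rewrite -expr2 sqrf_eq1 => /orP[] /eqP ->.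
  + by left; rewrite mulT1.
  + by right; case: x {xT e yT} => a b; apply: pairE; rewrite /=; ring.
Qed.

Definition phiT (F : finFieldType) (o : option F) : F * F :=
  if o is Some u then ((1 - u ^+ 2) / (1 + u ^+ 2), (2 * u) / (1 + u ^+ 2)) else (-1, 0).

Lemma Tcard (F : finFieldType) : (2 : F) != 0 -> (forall z : F, z ^+ 2 != -1) ->
  (#|F|.+1 <= #|Tset F|)%N.
Proof.
move=> n2 nosq.
have nz u : 1 + u ^+ 2 != 0 :> F.
  by apply: contra (nosq u); rewrite addrC addr_eq0.
rewrite -card_option -(card_imset _ (_ : injective (@phiT F))).
  apply: subset_leq_card; apply/subsetP => _ /imsetP[[u|] _ ->]; rewrite inE /=.
    apply/eqP; field; exact: nz.
  by rewrite sqrrN expr1n expr0n addr0.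
have ne (u : F) : phiT (Some u) != phiT None.
  apply/eqP => /= [[e _]]; move/eqP: n2; apply.
  have : (1 - u ^+ 2) = - (1 + u ^+ 2).
    by rewrite -[RHS]mulN1r -e mulfVK ?nz.
  by move=> h; transitivity ((1 + u ^+ 2) + (1 - u ^+ 2)); [ring | rewrite h; ring].
move=> [u|] [v|] //; last 2 first.
- by move=> e; move: (ne u); rewrite e eqxx.
- by move=> e; move: (ne v); rewrite e eqxx.
move=> e; congr Some.
have ku (w : F) : (phiT (Some w)).2 / (1 + (phiT (Some w)).1) = w.
  rewrite /=; field; rewrite ?nz //.
  by rewrite (_ : 1 + w ^+ 2 + (1 - w ^+ 2) = 2) //; ring.
by rewrite -(ku u) e ku.
Qed.


Lemma mulTN1 (F : finFieldType) (p : F * F) : mulT (-1, 0) p = ngT p.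
Proof. by apply: pairE; rewrite /=; ring. Qed.

Lemma sqT01 (F : finFieldType) (p : F * F) : sqT (mulT (0, 1) p) = ngT (sqT p).
Proof. by apply: pairE; rewrite /=; ring. Qed.

Lemma T01 (F : finFieldType) : ((0 : F), (1 : F)) \in Tset F.
Proof. by rewrite inE /= expr0n expr1n add0r. Qed.

Lemma T10 (F : finFieldType) : ((1 : F), (0 : F)) \in Tset F.
Proof. by rewrite inE /= expr0n expr1n addr0. Qed.

Lemma Tset_sq (F : finFieldType) (p : F * F) : p \in Tset F -> sqT p \in Tset F.
Proof. by move=> h; apply: Tset_mul. Qed.

Lemma sqT10 (F : finFieldType) : sqT ((1 : F), (0 : F)) = (1, 0).
Proof. by apply: pairE; rewrite /=; ring. Qed.

Lemma half0 (F : finFieldType) (x : F) : (2 : F) != 0 -> x = - x -> x = 0.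
Proof.
move=> n2 e; have /eqP : 2 * x = 0 by transitivity (x - - x); [ring | rewrite -e subrr].
by rewrite mulf_eq0 (negbTE n2) => /eqP.
Qed.

Lemma counting (F : finFieldType) : odd #|F| -> (9 <= #|F|)%N -> (forall z : F, z ^+ 2 != -1) ->
  exists r k0 : F * F, [/\ r \in Tset F, r \notin (@sqT F) @: Tset F, k0 \in Tset F &
                          (sqT (sqT k0)).2 != 0].
Proof.
move=> oF c9 nosq; have n2 := two_neq0 oF.
set Q := (@sqT F) @: Tset F.
have cT := Tcard n2 nosq.
have e2 : #|Tset F| = (2 * #|Q|)%N.
  apply/eqP; rewrite eqn_leq; apply/andP; split.
    apply: (@fib_le _ _ _ _ (@ngT F)) => x y xT yT e.
    exact: sqT_eq n2 nosq xT yT e.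
  apply: (@fib_ge _ _ _ _ (@ngT F)) => x xT; split; first exact: Tset_ng.
    apply/eqP; case: x xT => a b; rewrite inE /= => /eqP h [ea eb].
    have a0 : a = 0 by apply: (half0 n2); move: ea => /= ->.
    have b0 : b = 0 by apply: (half0 n2); move: eb => /= ->.
    by move: h; rewrite a0 b0 expr0n addr0 => /eqP; rewrite eq_sym oner_eq0.
  exact: sqT_ng.
have Q5 : (5 <= #|Q|)%N by lia.
have [r rT rQ] : exists2 r, r \in Tset F & r \notin Q.
  have : ~~ (Tset F \subset Q).
    by apply/negP => /subset_leq_card; rewrite e2; lia.
  by case/subsetPn => r rT rQ; exists r.
have : ~~ (Q \subset [:: (1, 0); (-1, 0); (0, 1); (0, -1)]).
  apply/negP => /subset_leq_card h; have := leq_trans h (card_size _); rewrite /= => h4.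
  by have := leq_trans Q5 h4.
case/subsetPn => _ /imsetP[k0 k0T ->] qn.
exists r, k0; split => //.
have qT := Tset_sq k0T.
move: qT qn; case: (sqT k0) => a b; rewrite inE /= => /eqP hab qn.
apply/eqP => h.
have /eqP : 2 * (a * b) = 0 by rewrite -h; ring.
rewrite mulf_eq0 (negbTE n2) /= mulf_eq0 => /orP[] /eqP h0; move: hab qn; rewrite h0.
- rewrite expr0n add0r => /eqP; rewrite sqrf_eq1 => /orP[] /eqP ->; by rewrite !inE eqxx ?orbT.
- rewrite expr0n addr0 => /eqP; rewrite sqrf_eq1 => /orP[] /eqP ->; by rewrite !inE eqxx ?orbT.
Qed.


Lemma caseII (F : finFieldType) : odd #|F| -> (9 <= #|F|)%N -> (forall z : F, z ^+ 2 != -1) ->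
  ~ Yn (PSL2 F).
Proof.
move=> oF c9 nosq; have n2 := two_neq0 oF.
have [a0 [b0 hab]] := sum_sq_m1 oF.
have [r [k0 [rT rQ k0T hk0]]] := counting oF c9 nosq.
pose S := mx2 a0 b0 b0 (- a0).
have dS : \det S = 1 by rewrite det_mx2 -[1]opprK -hab; ring.
have SS : S *m S = - 1%:M.
  by rewrite mul_mx2 mx2_1 mx2_opp; congr mx2; rewrite -?hab; ring.
have Shm p : S *m hm p = hm (cjT p) *m S.
  by rewrite /hm !mul_mx2; congr mx2; rewrite /=; ring.
have hmS p : hm p *m S = S *m hm (cjT p).
  by rewrite Shm; case: p => a b; rewrite /cjT /= opprK.
pose P := fun M : 'M[F]_2 =>
  [exists k, (k \in Tset F) && (M == hm (sqT k))] ||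
  [exists k, (k \in Tset F) && (M == S *m hm (sqT k))].
have P1 k M : k \in Tset F -> M = hm (sqT k) -> P M.
  by move=> kT ->; apply/orP; left; apply/existsP; exists k; rewrite kT eqxx.
have P2 k M : k \in Tset F -> M = S *m hm (sqT k) -> P M.
  by move=> kT ->; apply/orP; right; apply/existsP; exists k; rewrite kT eqxx.
have notP p : p \in Tset F -> p \notin (@sqT F) @: Tset F -> ~~ P (hm p).
  move=> pT pQ; apply/negP => /orP[] /existsP[k /andP[kT /eqP e]].
    by move: pQ; rewrite (hm_inj e) imset_f.
  move: pT e; case: p {pQ} => a b; case: (sqT k) => c d.
  rewrite inE /hm /S /= mul_mx2 => /eqP hp /mx2_inj [e1 e2 e3 e4].
  have a0' : a = 0 by apply: (half0 n2); rewrite {1}e1 e4; ring.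
  have b0' : b = 0 by apply: (half0 n2); rewrite {1}e2 -[b]opprK e3; ring.
  by move: hp; rewrite a0' b0' expr0n addr0 => /eqP; rewrite eq_sym oner_eq0.
pose q := sqT k0.
have qT : q \in Tset F by apply: Tset_sq.
have cjTK (p : F * F) : cjT (cjT p) = p by case: p => a b; rewrite /cjT /= opprK.
have cE : - S *m hm (cjT q) *m S *m hm q = hm (sqT q).
  rewrite !mulNmx Shm cjTK -(mulmxA (hm q)) SS mulmxN mulmx1 mulNmx opprK hmM //.
apply: (@crit2 F P (hm r) (hm (cjT r)) S (- S) (hm q) (hm (cjT q))).
- by apply: (P1 (1, 0)); rewrite ?T10 // sqT10 hm1.
- move=> M N _ _ /orP[] /existsP[k /andP[kT /eqP->]] /orP[] /existsP[k' /andP[k'T /eqP->]].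
  + by apply: (P1 (mulT k k')); rewrite ?Tset_mul // hmM sqTM.
  + apply: (P2 (mulT (cjT k) k')); rewrite ?Tset_mul ?Tset_cj //.
    by rewrite mulmxA hmS -mulmxA hmM sqTM sqT_cj.
  + by apply: (P2 (mulT k k')); rewrite ?Tset_mul // -mulmxA hmM sqTM.
  + apply: (P1 (mulT (0, 1) (mulT (cjT k) k'))); rewrite ?Tset_mul ?Tset_cj ?T01 //.
    rewrite sqT01 -hm_ng sqTM sqT_cj -hmM.
    by rewrite -mulmxA (mulmxA (hm _)) hmS !mulmxA SS mulNmx mul1mx mulNmx.
- by rewrite hm_det; move: rT; rewrite inE => /eqP.
- by rewrite hmM cjT_mul // hm1.
- move=> M _ /orP[] /existsP[k /andP[kT /eqP->]].
  + apply: (P1 k) => //; rewrite !hmM; congr hm.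
    by rewrite (mulTC (cjT r)) -mulTA cjT_mul // mulTC mulT1.
  + apply: (P2 (mulT r k)); rewrite ?Tset_mul //.
    rewrite mulmxA hmS (_ : cjT (cjT r) = r); last by case: (r) => a b; rewrite /cjT /= opprK.
    rewrite -!mulmxA !hmM; congr (_ *m hm _).
    by apply: pairE; rewrite /=; ring.
- exact: notP.
- rewrite hm_ng; apply: notP; first exact: Tset_ng.
  apply: contra rQ => /imsetP[k kT e]; apply/imsetP; exists (mulT (0, 1) k).
    by rewrite Tset_mul ?T01.
  by rewrite sqT01 -e; case: (r) => a b; rewrite /ngT /= !opprK.
- exact: dS.
- by rewrite hm_det; move: qT; rewrite inE => /eqP.
- by rewrite mulNmx SS opprK.
- by rewrite hmM cjT_mul // hm1.
- by apply: (P2 (1, 0)); rewrite ?T10 // sqT10 hm1 mulmx1.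
- exact: (P1 k0).
- rewrite cE -hm1; apply/eqP => /hm_inj e; move: hk0; rewrite -/q e eqxx //.
- rewrite cE -hm1 hm_ng; apply/eqP => /hm_inj e; move: hk0; rewrite -/q e /= oppr0 eqxx //.
Qed.

Local Close Scope ring_scope.

Theorem lemma2p16 (F : finFieldType) :
  odd #|F| -> #|F| <> 3 -> #|F| <> 5 -> ~ Yn (PSL2 F).
Proof.
move=> oF n3 n5.
have g1 : (1 < #|F|)%N by apply: finNzRing_gt1.
case: (#|F| =P 7) => [c7|n7]; first exact: caseIII.
have c9 : (9 <= #|F|)%N.
  move: oF g1 n3 n5 n7; case: #|F| => [|[|[|[|[|[|[|[|[|n]]]]]]]]] //.
case: (pickP (fun i : F => (i ^+ 2 == -1)%R)) => [i /eqP hi|h].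
  by apply: (caseI oF _ hi); apply: leq_trans c9.
apply: (caseII oF c9) => z; by rewrite h.
Qed.
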